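(* Let $t=a^id^j$ and let $W$ be a finite-dimensional left $\mathcal{O}_{nc}(B)$-comodule all of whose weights equal $t$. Then the coaction of $W$ is $w\mapsto t\otimes w$ for all $w\in W$; in particular $W$ is a direct sum of copies of $k_t$ and its coaction takes values in the subcoalgebra of $\mathcal{O}_{nc}(B)$ spanned by the monomials $a^pd^q$.
   Context: $\mathcal{O}_{nc}(\mathrm{GL}_2)$ is the Hopf algebra generated by $a,b,c,d,\delta,\delta^{-1}$ with relations $ac=ca$, $bd=db$, $ad-cb=\delta=da-bc$, $\delta\delta^{-1}=1=\delta^{-1}\delta$, $a\delta^{-1}d-b\delta^{-1}c=1=d\delta^{-1}a-c\delta^{-1}b$, $b\delta^{-1}a=a\delta^{-1}b$, $c\delta^{-1}d=d\delta^{-1}c$, with $\Delta(a)=a\otimes a+b\otimes c$, $\Delta(b)=a\otimes b+b\otimes d$, $\Delta(c)=c\otimes a+d\otimes c$, $\Delta(d)=c\otimes b+d\otimes d$, $\Delta(\delta^{\pm1})=\delta^{\pm1}\otimes\delta^{\pm1}$. $\mathcal{O}_{nc}(B)=\mathcal{O}_{nc}(\mathrm{GL}_2)/(b)$ (a quotient Hopf algebra; images of $a,d$ are invertible grouplikes), and $\mathcal{O}(T)=\mathcal{O}_{nc}(\mathrm{GL}_2)/(b,c)\cong k[a^{\pm1},d^{\pm1}]$, a quotient of $\mathcal{O}_{nc}(B)$. The weights of an $\mathcal{O}_{nc}(B)$-comodule $W$ are the monomials $t$ with nonzero weight space $W_t=\{w: w\mapsto t\otimes w\}$ for the induced $\mathcal{O}(T)$-coaction.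 $k_t$ is the one-dimensional comodule $1\mapsto t\otimes1$. *)

(* Defs.v *)
From HB Require Import structures.
From mathcomp Require Import all_boot all_order all_algebra.
Set Implicit Arguments. Unset Strict Implicit. Unset Printing Implicit Defensive.
Import Order.TTheory GRing.Theory Num.Theory.
Local Open Scope ring_scope.

(* The Hopf algebra O_nc(B) = O_nc(GL_2)/(b).                                *)
(* Setting b = 0 in the relations of O_nc(GL_2) gives: ad = da = delta,      *)
(* ac = ca, a and d invertible with delta^{-1} = a^{-1} d^{-1}, and the      *)
(* remaining relations become consequences.  Hence                           *)
(*   O_nc(B) = k[a^{+-1}] (x) k<d^{+-1}, c>,  a central,                     *)
(* whose k-basis consists of the normal-form monomials                      *)
(*   a^p d^{n0} c d^{n1} c ... c d^{nk}     (p, n_i integers, k >= 0).       *)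
(* Such a monomial is encoded as  (p, (n0, [:: n1; ...; nk])).               *)
Definition mono : Type := (int * (int * seq int))%type.

Definition torus_mono (i j : int) : mono := (i, (j, [::])).

(* Coproduct of the word d^{n0} c d^{n1} ... c d^{nk} (no a-factor), as a   *)
(* list of pairs (left tensor factor, right tensor factor), each a normal    *)
(* form monomial; computed from Delta(d^{+-1}) = d^{+-1} (x) d^{+-1},        *)
(* Delta(c) = c (x) a + d (x) c, Delta(a) = a (x) a, multiplicativity, and   *)
(* centrality of a:                                                          *)
(*  Delta(d^{n0} c w) = (d^{n0} c (x) d^{n0} a + d^{n0+1} (x) d^{n0} c) Delta(w). *)
Fixpoint deltaw (n0 : int) (ns : seq int) : seq (mono * mono) :=
  match ns with
  | [::] => [:: ((0, (n0, [::])), (0, (n0, [::])))]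
  | n1 :: ns' =>
      flatten [seq [:: ((LR.1.1, (n0, LR.1.2.1 :: LR.1.2.2)),
                        (LR.2.1 + 1, (n0 + LR.2.2.1, LR.2.2.2)));
                       ((LR.1.1, (n0 + 1 + LR.1.2.1, LR.1.2.2)),
                        (LR.2.1, (n0, LR.2.2.1 :: LR.2.2.2)))]
              | LR <- deltaw n1 ns']
  end.

(* Delta(a^p w) = (a^p (x) a^p) Delta(w). *)
Definition delta (m : mono) : seq (mono * mono) :=
  [seq ((m.1 + x.1.1, x.1.2), (m.1 + x.2.1, x.2.2)) | x <- deltaw m.2.1 m.2.2].

Definition Dcoef (m m1 m2 : mono) : nat := count (pred1 (m1, m2)) (delta m).

(* Counit: eps(a) = eps(d) = 1, eps(c) = 0. *)
Definition eps (m : mono) : nat := if m.2.2 is [::] then 1%N else 0%N.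

(* Finite-dimensional left comodules.  W = k^n (row vectors).  Since the     *)
(* monomials form a basis of H = O_nc(B), an element of H (x) W is a         *)
(* finitely supported family (w_m)_m of vectors, standing for sum_m m (x) w_m.*)
(* A linear coaction rho : W -> H (x) W is thus a family of matrices         *)
(* rho m : 'M_n, finitely supported, with  rho(w) = sum_m m (x) (w *m rho m).*)
(* Coassociativity (Delta (x) id) rho = (id (x) rho) rho reads, on the       *)
(* coefficient of m1 (x) m2:  sum_m Dcoef m m1 m2 * rho m = rho m1 *m rho m2.*)
(* Counitality (eps (x) id) rho = id reads  sum_m eps m * rho m = 1.         *)
(* The sums are taken over any duplicate-free list S containing the support. *)
Definition is_comodule (k : fieldType) (n : nat) (rho : mono -> 'M[k]_n) : Prop :=
  exists S : seq mono,
    [/\ uniq S,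
        (forall m, m \notin S -> rho m = 0),
        (forall m1 m2, \sum_(m <- S) (Dcoef m m1 m2)%:R *: rho m = rho m1 *m rho m2)
      & \sum_(m <- S) (eps m)%:R *: rho m = 1%:M].

(* The projection pi : O_nc(B) -> O(T) kills every monomial containing c and *)
(* sends a^p d^q to a^p d^q.  So the coefficient of a^p d^q in               *)
(* (pi (x) id) rho(w) is  w *m rho (torus_mono p q).                         *)
(* Weight space W_t for t = a^i d^j:  {w | (pi (x) id) rho(w) = t (x) w}.    *)
Definition in_weight_space (k : fieldType) (n : nat) (rho : mono -> 'M[k]_n)
    (i j : int) (w : 'rV[k]_n) : Prop :=
  forall p q : int, w *m rho (torus_mono p q) = ((p == i) && (q == j))%:R *: w.

Definition is_weight (k : fieldType) (n : nat) (rho : mono -> 'M[k]_n) (i j : int) : Prop :=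
  exists2 w : 'rV[k]_n, w != 0 & in_weight_space rho i j w.

(* Main.v *)
Require Import Defs.
From HB Require Import structures.
From mathcomp Require Import all_boot all_order all_algebra.
Import Order.TTheory GRing.Theory Num.Theory.
Local Open Scope ring_scope.

Lemma deltawR (ns : seq int) (n0 : int) x : x \in deltaw n0 ns ->
  x.2.2.2 = [::] -> x.1 = (0, (n0, ns)) /\ x.2.1 = (size ns)%:Z.
Proof.
elim: ns n0 x => [|n1 ns IH] n0 x /=.
  by rewrite inE => /eqP -> .
case/flatten_mapP => LR /IH {}IH; rewrite !inE => /orP[] /eqP -> //=.
move=> /IH [-> ->]; split => //.
by rewrite -addn1 PoszD.
Qed.

Lemma deltawL (ns : seq int) (n0 : int) x : x \in deltaw n0 ns ->
  x.1.2.2 = [::] -> x.2 = (0, (n0, ns)) /\ x.1.1 = 0.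
Proof.
elim: ns n0 x => [|n1 ns IH] n0 x /=.
  by rewrite inE => /eqP -> .
case/flatten_mapP => LR /IH {}IH; rewrite !inE => /orP[] /eqP -> //=.
by move=> /IH [-> ->].
Qed.

Lemma deltaR m x : x \in delta m -> x.2.2.2 = [::] ->
  x.1 = m /\ x.2.1 = m.1 + (size m.2.2)%:Z.
Proof.
case: m => p [q ns]; rewrite /delta /= => /mapP [y /deltawR H ->] /= /H [-> ->].
by rewrite addr0.
Qed.

Lemma deltaL m x : x \in delta m -> x.1.2.2 = [::] ->
  x.2 = m /\ x.1.1 = m.1.
Proof.
case: m => p [q ns]; rewrite /delta /= => /mapP [y /deltawL H ->] /= /H [-> ->].
by rewrite addr0.
Qed.

Lemma sum_single (R : nmodType) (S : seq mono) (F : mono -> R) x :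
  uniq S -> (forall m, m != x -> F m = 0) -> (x \notin S -> F x = 0) ->
  \sum_(m <- S) F m = F x.
Proof.
move=> uS H0 Hx; case: (boolP (x \in S)) => xS.
  rewrite (bigD1_seq x) //= big1 ?addr0 // => m; exact: H0.
rewrite Hx // big1_seq // => m /andP[_ mS]; apply: H0; apply: contraNneq xS => <-.
by [].
Qed.
From mathcomp Require Import zify.

Lemma torus_eq p q p' q' : (torus_mono p q == torus_mono p' q') = (p == p') && (q == q').
Proof. by rewrite /torus_mono !xpair_eqE eqxx andbT. Qed.

Theorem mainTheorem15 (k : fieldType) (n : nat) (rho : mono -> 'M[k]_n) (i j : int) :
  is_comodule rho ->
  (forall p q : int, is_weight rho p q -> p = i /\ q = j) ->
  forall (w : 'rV[k]_n) (m : mono),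
    w *m rho m = (m == torus_mono i j)%:R *: w.
Proof.
move=> [S [uS supp coas coun]] Hw.
set t := torus_mono i j.
have DT : forall m' p q p' q', Dcoef m' (torus_mono p q) (torus_mono p' q')
   = ((m' == torus_mono p q) && (torus_mono p q == torus_mono p' q'))%N.
  move=> m' p q p' q'; rewrite /Dcoef.
  case: (eqVneq m' (torus_mono p q)) => [->|ne].
    rewrite /delta /= !addr0 /= addn0.
    by rewrite /torus_mono xpair_eqE eqxx.
  apply/count_memPn; apply/negP => /deltaR [] // H _.
  by move: ne; rewrite /= in H; rewrite H eqxx.
have TT : forall p q p' q', rho (torus_mono p q) *m rho (torus_mono p' q')
   = (torus_mono p q == torus_mono p' q')%:R *: rho (torus_mono p q).
  move=> p q p' q'; rewrite -coas (@sum_single _ S _ (torus_mono p q)) //.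
  - by rewrite DT eqxx.
  - by move=> m ne; rewrite DT (negbTE ne) scale0r.
  - by move=> nS; rewrite supp // scaler0.
have W0 : forall p q (w : 'rV[k]_n), torus_mono p q != t -> w *m rho (torus_mono p q) = 0.
  move=> p q w ne; case: (eqVneq (w *m rho (torus_mono p q)) 0) => // nz.
  exfalso; move/negP: ne; apply.
  suff [-> ->] : p = i /\ q = j by [].
  apply: Hw; exists (w *m rho (torus_mono p q)) => // p' q'.
  rewrite -mulmxA TT -scalemxAr torus_eq.
  by rewrite [p == _]eq_sym [q == _]eq_sym.
have Rt : forall w : 'rV[k]_n, w *m rho t = w.
  move=> w; have := congr1 (mulmx w) coun.
  rewrite mulmx1 mulmx_sumr => E; rewrite -[X in _ = X]E.
  rewrite (@sum_single _ S _ t) //.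
  - by rewrite -scalemxAr /eps /= scale1r.
  - move=> [p [q ns]] ne; rewrite -scalemxAr; case: ns ne => [|x ns] ne /=.
      by rewrite (W0 p q) // scaler0.
    by rewrite scale0r.
  - by move=> nS; rewrite supp // scaler0 mulmx0.
have NT : forall (w : 'rV[k]_n) (m : mono), m.2.2 != [::] -> w *m rho m = 0.
  move=> w m ne; case: (eqVneq i (m.1 + (size m.2.2)%:Z)) => Hi.
    have H : rho t *m rho m = 0.
      rewrite -coas big1_seq // => m' _; rewrite /Dcoef.
      have -> : count (pred1 (t, m)) (delta m') = 0%N.
        apply/count_memPn; apply/negP => /deltaL [] // Hm Ht.
        move: Ht Hi ne; rewrite -Hm /= => ->.
        case: m {Hm} => p [q [|x ns]] //= Hx _; exfalso; lia.
      by rewrite scale0r.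
    by rewrite -(Rt w) -mulmxA H mulmx0.
  have H : rho m *m rho t = 0.
    rewrite -coas big1_seq // => m' _; rewrite /Dcoef.
    have -> : count (pred1 (m, t)) (delta m') = 0%N.
      apply/count_memPn; apply/negP => /deltaR [] // Hm Ht.
      by move: Ht Hi; rewrite -Hm /= => ->; rewrite eqxx.
    by rewrite scale0r.
  by rewrite -(Rt (w *m rho m)) -mulmxA H mulmx0.
move=> w [p [q ns]]; case: ns => [|x ns].
  change (p, (q, [::])) with (torus_mono p q).
  case: (eqVneq (torus_mono p q) t) => [E|ne].
    by rewrite E Rt scale1r.
  by rewrite W0 // scale0r.
rewrite NT //; have -> : ((p, (q, x :: ns)) == t) = false.
  by apply/negbTE/eqP; case.
by rewrite scale0r.
Qed.
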